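(* Let $0,1,\dots,5$ be points of $\mathbb{P}^3(\mathbb{C})$ with chosen representative vectors $v_0,\dots,v_5$, and assume $[0123]\neq 0$ (so the lines $01$ and $23$ are skew). Define the vectors $$p=[0125]v_3-[0135]v_2,\qquad q=-[0124]v_3-[0234]v_1,\qquad r=[1345]v_2-[2345]v_1,$$ which represent the intersection points $23\cap 015$, $13\cap 024$, $12\cap 345$ respectively (line meets plane). Then the polynomial identity $$-[v_1v_0v_2q]\,[v_0\,p\,v_3\,r]+[p\,v_0v_2q]\,[v_0v_1v_3r] \;=\; [0123]^2\big([0125][0234][1345]-[0124][2345][0135]\big)$$ holds. Consequently, if $p,q,r$ are nonzero (i.e. the plane $015$ does not contain the line $23$, the plane $024$ does not contain the line $13$, and the plane $345$ does not contain the line $12$), then the three lines joining $1$ to $\langle p\rangle$, $2$ to $\langle q\rangle$, and $3$ to $\langle r\rangle$ pass through a common point if and only if $[0125][0234][1345]-[0124][2345][0135]=0$.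
   Context: For vectors $a,b,c,d\in\mathbb{C}^4$, $[abcd]$ is the determinant of the $4\times4$ matrix with columns $a,b,c,d$; for point labels, $[ijkl]$ means $[v_iv_jv_kv_l]$. For a nonzero vector $v$, $\langle v\rangle$ denotes the corresponding point of $\mathbb{P}^3$. A line $ij$ is the line through points $i,j$; a plane $ijk$ is the plane through three non-collinear points. *)

(* Defs.v *)
(* C^4 is modelled as column vectors 'cV[R[i]]_4, where
   R : realType (so R[i] = complex R is the field of complex numbers). *)
From HB Require Import structures.
From mathcomp Require Import all_boot all_order all_algebra.
From mathcomp Require Import complex.
From mathcomp Require Import reals.
Set Implicit Arguments. Unset Strict Implicit. Unset Printing Implicit Defensive.
Import Order.TTheory GRing.Theory Num.Theory.
Local Open Scope ring_scope.

Definition det4 {F : comRingType} (a b c d : 'cV[F]_4) : F :=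
  \det (\matrix_(i < 4, j < 4) (nth 0 [:: a; b; c; d] j) i 0).

(* x (a vector) lies in the linear span of a and b, i.e. the point <x> lies
   on the projective line joining <a> and <b> (when a, b are independent). *)
Definition on_line {F : fieldType} (x a b : 'cV[F]_4) : Prop :=
  exists s t : F, x = s *: a + t *: b.

Definition concurrent3 {F : fieldType} (a1 b1 a2 b2 a3 b3 : 'cV[F]_4) : Prop :=
  exists x : 'cV[F]_4, x != 0 /\ on_line x a1 b1 /\ on_line x a2 b2 /\ on_line x a3 b3.

(* Main.v *)
Require Import Defs.
From HB Require Import structures.
From mathcomp Require Import all_boot all_order all_algebra.
From mathcomp Require Import ring.
Import Order.TTheory GRing.Theory Num.Theory.
From mathcomp Require Import complex reals.
Local Open Scope ring_scope.

Definition ent {F : comRingType} (a : 'cV[F]_4) (k : nat) : F := a (inord k) 0.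

Lemma entE {F : comRingType} (a : 'cV[F]_4) (i : 'I_4) : a i 0 = ent a i.
Proof. by rewrite /ent inord_val. Qed.

Lemma det4E {F : comRingType} (a b c d : 'cV[F]_4) : det4 a b c d =
 ent a 0%N * ent b 1%N * ent c 2%N * ent d 3%N - ent a 0%N * ent b 1%N * ent c 3%N * ent d 2%N - ent a 0%N * ent b 2%N * ent c 1%N * ent d 3%N + ent a 0%N * ent b 2%N * ent c 3%N * ent d 1%N + ent a 0%N * ent b 3%N * ent c 1%N * ent d 2%N - ent a 0%N * ent b 3%N * ent c 2%N * ent d 1%N - ent a 1%N * ent b 0%N * ent c 2%N * ent d 3%N + ent a 1%N * ent b 0%N * ent c 3%N * ent d 2%N + ent a 1%N * ent b 2%N * ent c 0%N * ent d 3%N - ent a 1%N * ent b 2%N * ent c 3%N * ent d 0%N - ent a 1%N * ent b 3%N * ent c 0%N * ent d 2%N + ent a 1%N * ent b 3%N * ent c 2%N * ent d 0%N + ent a 2%N * ent b 0%N * ent c 1%N * ent d 3%N - ent a 2%N * ent b 0%N * ent c 3%N * ent d 1%N - ent a 2%N * ent b 1%N * ent c 0%N * ent d 3%N + ent a 2%N * ent b 1%N * ent c 3%N * ent d 0%N + ent a 2%N * ent b 3%N * ent c 0%N * ent d 1%N - ent a 2%N * ent b 3%N * ent c 1%N * ent d 0%N - ent a 3%N * ent b 0%N * ent c 1%N * ent d 2%N + ent a 3%N * ent b 0%N * ent c 2%N * ent d 1%N + ent a 3%N * ent b 1%N * ent c 0%N * ent d 2%N - ent a 3%N * ent b 1%N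 * ent c 2%N * ent d 0%N - ent a 3%N * ent b 2%N * ent c 0%N * ent d 1%N + ent a 3%N * ent b 2%N * ent c 1%N * ent d 0%N.
Proof.
rewrite /det4.
rewrite (expand_det_row _ ord0) !big_ord_recl big_ord0 /cofactor.
rewrite !(expand_det_row _ ord0) !big_ord_recl !big_ord0 /cofactor.
rewrite !(expand_det_row _ ord0) !big_ord_recl !big_ord0 /cofactor.
rewrite !det_mx11 !mxE /= !entE /=.
ring.
Qed.

Definition rent {F : comRingType} (v : 'rV[F]_3) (k : nat) : F := v 0 (inord k).
Lemma rentE {F : comRingType} (v : 'rV[F]_3) (i0 : 'I_1) (i : 'I_3) : v i0 i = rent v i.
Proof. by rewrite /rent inord_val (ord1 i0). Qed.

Lemma det3E {F : fieldType} (a b c e f g : F) :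
  \det (\matrix_(i < 3, j < 3)
  nth 0 (nth [::] [:: [:: 0; c; f]; [:: a; 0; g]; [:: b; -e; 0]] i) j) = -(a*e*f - c*g*b).
Proof.
  rewrite (expand_det_row _ ord0) !big_ord_recl big_ord0 /cofactor.
  rewrite !(expand_det_row _ ord0) !big_ord_recl !big_ord0 /cofactor.
  rewrite !det_mx11 !mxE /=.
  rewrite /bump /= ?add0n ?addn0 ?expr0 ?expr1 ?exprD ?expr1 ?expr0 !(mul0r, mulr0, add0r, addr0, mul1r, mulr1, mulN1r, mulrN1, opprK).
  change (c * - (g * - b) + f * (a * - e) = - (a * e * f - c * g * b)). ring.
Qed.

Lemma kern3 {F : fieldType} (a b c e f g : F) : a*e*f - c*g*b = 0 ->
  exists y1 y2 y3 : F, (y1 != 0 \/ y2 != 0 \/ y3 != 0) /\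
    a*y2 + b*y3 = 0 /\ c*y1 - e*y3 = 0 /\ f*y1 + g*y2 = 0.
Proof.
move=> hD.
pose A := \matrix_(i < 3, j < 3)
  nth 0 (nth [::] [:: [:: 0; c; f]; [:: a; 0; g]; [:: b; -e; 0]] i) j.
have dA : \det A = -(a*e*f - c*g*b) by apply: det3E.
have /det0P [v vn vA] : \det A == 0 by rewrite dA hD oppr0.
have E : forall j : 'I_3, (v *m A) 0 j = 0 by move=> j; rewrite vA mxE.
have E0 := E (@Ordinal 3 0 isT).
have E1 := E (@Ordinal 3 1 isT).
have E2 := E (@Ordinal 3 2 isT).
move: E0 E1 E2; rewrite !mxE !big_ord_recl !big_ord0 !mxE /bump /= !rentE /= => E0 E1 E2.
exists (rent v 0), (rent v 1), (rent v 2).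
split; last first.
  split; first by rewrite -[RHS]E0; ring.
  split; first by rewrite -[RHS]E1; ring.
  by rewrite -[RHS]E2; ring.
case: (eqVneq (rent v 0) 0) => [h0|]; last by left.
case: (eqVneq (rent v 1) 0) => [h1|]; last by right; left.
case: (eqVneq (rent v 2) 0) => [h2|]; last by right; right.
exfalso; move/eqP: vn; apply.
apply/matrixP => i j; rewrite [RHS]mxE rentE.
by case: j => [[|[|[|k]]] Hk] //=.
Qed.

Lemma linpar {F : fieldType} (a b y2 y3 : F) : (a != 0 \/ b != 0) ->
  a*y2 + b*y3 = 0 -> exists t, y2 = - t * b /\ y3 = t * a.
Proof.
move=> hab h.
case: (eqVneq a 0) => [a0|an].
  have bn : b != 0 by case: hab => //; rewrite a0 eqxx.
  rewrite a0 mul0r add0r in h.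
  have y30 : y3 = 0 by move/eqP: h; rewrite mulf_eq0 (negbTE bn) /= => /eqP.
  exists (- y2 / b); split; last by rewrite a0 y30 mulr0.
  by field.
exists (y3 / a); split; last by field.
have -> : y2 = (a * y2) / a by field.
have -> : a * y2 = - (b * y3) by apply/eqP; rewrite -addr_eq0 h.
by field.
Qed.

Lemma det4_0_2 {F : comRingType} (v0 v2 v3 : 'cV[F]_4) : det4 v0 0 v2 v3 = 0.
Proof. rewrite det4E /ent !mxE; ring. Qed.

Lemma indep {F : fieldType} (v0 v1 v2 v3 : 'cV[F]_4) (x y z : F) :
  det4 v0 v1 v2 v3 != 0 -> x *: v1 + y *: v2 + z *: v3 = 0 ->
  x = 0 /\ y = 0 /\ z = 0.
Proof.
move=> hd h.
have h1 : det4 v0 (x *: v1 + y *: v2 + z *: v3) v2 v3 = x * det4 v0 v1 v2 v3.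
  rewrite !det4E /ent !mxE; ring.
have h2 : det4 v0 v1 (x *: v1 + y *: v2 + z *: v3) v3 = y * det4 v0 v1 v2 v3.
  rewrite !det4E /ent !mxE; ring.
have h3 : det4 v0 v1 v2 (x *: v1 + y *: v2 + z *: v3) = z * det4 v0 v1 v2 v3.
  rewrite !det4E /ent !mxE; ring.
have z2 : det4 v0 v1 0 v3 = 0 by rewrite det4E /ent !mxE; ring.
have z3 : det4 v0 v1 v2 0 = 0 by rewrite det4E /ent !mxE; ring.
rewrite h det4_0_2 in h1; rewrite h z2 in h2; rewrite h z3 in h3.
have k : forall w : F, 0 = w * det4 v0 v1 v2 v3 -> w = 0.
  by move=> w /esym/eqP; rewrite mulf_eq0 (negbTE hd) orbF => /eqP.
by split; [exact: k|split; exact: k].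
Qed.

Arguments indep {F v0 v1 v2 v3 x y z}.
Arguments kern3 {F a b c e f g}.
Arguments linpar {F a b y2 y3}.

Theorem lemma3p1 (R : realType) (v0 v1 v2 v3 v4 v5 : 'cV[R[i]]_4) :
  v0 != 0 -> v1 != 0 -> v2 != 0 -> v3 != 0 -> v4 != 0 -> v5 != 0 ->
  det4 v0 v1 v2 v3 != 0 ->
  let p := det4 v0 v1 v2 v5 *: v3 - det4 v0 v1 v3 v5 *: v2 in
  let q := - det4 v0 v1 v2 v4 *: v3 - det4 v0 v2 v3 v4 *: v1 in
  let r := det4 v1 v3 v4 v5 *: v2 - det4 v2 v3 v4 v5 *: v1 in
  let D := det4 v0 v1 v2 v5 * det4 v0 v2 v3 v4 * det4 v1 v3 v4 v5
           - det4 v0 v1 v2 v4 * det4 v2 v3 v4 v5 * det4 v0 v1 v3 v5 in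
  (- det4 v1 v0 v2 q * det4 v0 p v3 r + det4 p v0 v2 q * det4 v0 v1 v3 r
     = det4 v0 v1 v2 v3 ^+ 2 * D)
  /\ (p != 0 -> q != 0 -> r != 0 ->
      (concurrent3 v1 p v2 q v3 r <-> D = 0)).
Proof.
move=> _ _ _ _ _ _ hd.
cbv zeta.
set a := det4 v0 v1 v2 v5.
set b := det4 v0 v1 v3 v5.
set c := det4 v0 v1 v2 v4.
set e := det4 v0 v2 v3 v4.
set f := det4 v1 v3 v4 v5.
set g := det4 v2 v3 v4 v5.
set d := det4 v0 v1 v2 v3 in hd *.
split.
  have h1 : det4 v1 v0 v2 (- c *: v3 - e *: v1) = c * d.
    rewrite /d !det4E /ent !mxE; ring.
  have h2 : det4 v0 (a *: v3 - b *: v2) v3 (f *: v2 - g *: v1) = b * g * d.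
    rewrite /d !det4E /ent !mxE; ring.
  have h3 : det4 (a *: v3 - b *: v2) v0 v2 (- c *: v3 - e *: v1) = - (a * e * d).
    rewrite /d !det4E /ent !mxE; ring.
  have h4 : det4 v0 v1 v3 (f *: v2 - g *: v1) = - (f * d).
    rewrite /d !det4E /ent !mxE; ring.
  rewrite h1 h2 h3 h4; ring.
move=> pn qn rn.
have ab : a != 0 \/ b != 0.
  case: (eqVneq a 0) => [a0|]; last by left.
  case: (eqVneq b 0) => [b0|]; last by right.
  exfalso; move/eqP: pn; apply; apply/matrixP=> i j; rewrite !mxE a0 b0; ring.
have ce : c != 0 \/ - e != 0.
  case: (eqVneq c 0) => [c0|]; last by left.
  case: (eqVneq e 0) => [e0|]; last by right; rewrite oppr_eq0.
  exfalso; move/eqP: qn; apply; apply/matrixP=> i j; rewrite !mxE c0 e0; ring.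
have fg : f != 0 \/ g != 0.
  case: (eqVneq f 0) => [f0|]; last by left.
  case: (eqVneq g 0) => [g0|]; last by right.
  exfalso; move/eqP: rn; apply; apply/matrixP=> i j; rewrite !mxE f0 g0; ring.
split.
  case=> x [xn [[s [t hp]] [[s' [t' hq]] [s'' [t'' hr]]]]].
  have E12 : (s + t' * e) *: v1 + (- (t * b) - s') *: v2 + (t * a + t' * c) *: v3 = 0.
    have : x - x = 0 := subrr x.
    rewrite {1}hp hq => <-.
    apply/matrixP=> i j; rewrite !mxE; ring.
  have E13 : (s + t'' * g) *: v1 + (- (t * b) - t'' * f) *: v2 + (t * a - s'') *: v3 = 0.
    have : x - x = 0 := subrr x.
    rewrite {1}hp hr => <-.
    apply/matrixP=> i j; rewrite !mxE; ring.
  have [h1 [h2 h3]] := indep hd E12.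
  have [h4 [h5 h6]] := indep hd E13.
  have Dy1 : (a * e * f - c * g * b) * s = 0.
    have -> : (a * e * f - c * g * b) * s = - (b * g * (c * (s + t' * e) - e * (t * a + t' * c))
       - a * e * (f * (s + t'' * g) + g * (- (t * b) - t'' * f))) by ring.
    by rewrite h1 h3 h4 h5; ring.
  have Dy2 : (a * e * f - c * g * b) * (t * b) = 0.
    have -> : (a * e * f - c * g * b) * (t * b) = (- b * f * (c * (s + t' * e) - e * (t * a + t' * c))
       + b * c * (f * (s + t'' * g) + g * (- (t * b) - t'' * f))) by ring.
    by rewrite h1 h3 h4 h5; ring.
  have Dy3 : (a * e * f - c * g * b) * (t * a) = 0.
    have -> : (a * e * f - c * g * b) * (t * a) = - (a * f * (c * (s + t' * e) - e * (t * a + t' * c))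
       - a * c * (f * (s + t'' * g) + g * (- (t * b) - t'' * f))) by ring.
    by rewrite h1 h3 h4 h5; ring.
  apply/eqP; apply/negPn/negP => Dn.
  have k : forall w : R[i], (a * e * f - c * g * b) * w = 0 -> w = 0.
    by move=> w /eqP; rewrite mulf_eq0 (negbTE Dn) /= => /eqP.
  move/k: Dy1 => s0; move/k: Dy2 => tb0; move/k: Dy3 => ta0.
  move/eqP: xn; apply; rewrite hp.
  apply/matrixP=> i j; rewrite !mxE.
  have -> : s * v1 i j + t * (a * v3 i j - b * v2 i j) = s * v1 i j + (t * a) * v3 i j - (t * b) * v2 i j by ring.
  rewrite s0 tb0 ta0; ring.
move=> hD.
have [y1 [y2 [y3 [ny [e1 [e2 e3]]]]]] := kern3 hD.
exists (y1 *: v1 + y2 *: v2 + y3 *: v3).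
split.
  apply/eqP => /(indep hd) [z1 [z2 z3]].
  by move: ny; rewrite z1 z2 z3 eqxx; case=> [//|[//|//]].
split.
  have [t [ht1 ht2]] := linpar ab e1.
  exists y1, t; apply/matrixP=> i j; rewrite !mxE ht1 ht2; ring.
split.
  have e2' : c * y1 + - e * y3 = 0 by rewrite -[RHS]e2; ring.
  have [t [ht1 ht2]] := linpar ce e2'.
  exists y2, (- t); apply/matrixP=> i j; rewrite !mxE ht1 ht2; ring.
have [t [ht1 ht2]] := linpar fg e3.
exists y3, t; apply/matrixP=> i j; rewrite !mxE ht1 ht2; ring.
Qed.
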